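(* $\mathrm{NP}/\mathrm{rpoly}=\mathrm{ALL}$, i.e., every promise problem $A=(A_{yes},A_{no})$ over $\{0,1\}^*$ belongs to $\mathrm{NP}/\mathrm{rpoly}$.
   Context: NP/rpoly: $A=(A_{yes},A_{no})\in\mathrm{NP}/\mathrm{rpoly}$ iff there exist a classical probabilistic polynomial-time algorithm $M$ and a family $\{q_s\}_{s\in\mathbb{N}}$ of probability distributions $q_s$ on $\{0,1\}^{\mathrm{poly}(s)}$ (arbitrary, not required to be computable) such that, when $M$ is run on input $(x,b)$ with $b$ sampled from $q_{|x|}$, $\Pr(M\text{ accepts})>0$ if $x\in A_{yes}$ and $\Pr(M\text{ accepts})=0$ if $x\in A_{no}$. ALL denotes the class of all (promise) problems. *)

(* Defs.v *)
From Stdlib Require Import Reals List Arith Bool.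
Import ListNotations.
Open Scope R_scope.

(* States are 0 .. nstates-1; 0 is the start state, 1 is the (halting)*)
(* accepting state; reaching a state >= nstates halts (rejecting).     *)
(* Since delta only matters on the finite domain {0..nstates-1} x sym, *)
(* a TM is a finite object.                                             *)

Inductive sym : Type := Blank | Zero | One | Sep.
Inductive move : Type := MLeft | MRight | MStay.

Record TM : Type := mkTM {
  nstates : nat;
  delta : nat -> sym -> (nat * sym * move)
}.

Record config : Type := mkConfig {
  cst : nat;
  cleft : list sym;   (* cells to the left of the head, nearest first *)
  ccur : sym;
  cright : list sym   (* cells to the right of the head, nearest first *)
}.

Definition step (M : TM) (c : config) : config :=
  if orb (Nat.eqb (cst c) 1) (negb (Nat.ltb (cst c) (nstates M))) then c
  else
    match delta M (cst c) (ccur c) with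
    | (q, s, MLeft) =>
        match cleft c with
        | nil => mkConfig q nil Blank (s :: cright c)
        | h :: t => mkConfig q t h (s :: cright c)
        end
    | (q, s, MRight) =>
        match cright c with
        | nil => mkConfig q (s :: cleft c) Blank nil
        | h :: t => mkConfig q (s :: cleft c) h t
        end
    | (q, s, MStay) => mkConfig q (cleft c) s (cright c)
    end.

Definition init_config (w : list sym) : config :=
  match w with
  | nil => mkConfig 0 nil Blank nil
  | h :: t => mkConfig 0 nil h t
  end.

Definition run (M : TM) (t : nat) (c : config) : config := Nat.iter t (step M) c.

(* M accepts w within t steps (state 1 is absorbing). *)
Definition accepts_within (M : TM) (t : nat) (w : list sym) : bool :=
  Nat.eqb (cst (run M t (init_config w))) 1.

Definition poly_bound (c k n : nat) : nat := (c * n ^ k + c)%nat.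

Definition bit (b : bool) : sym := if b then One else Zero.

Definition encode3 (x b r : list bool) : list sym :=
  map bit x ++ Sep :: map bit b ++ Sep :: map bit r.

Fixpoint all_bits (n : nat) : list (list bool) :=
  match n with
  | O => [nil]
  | S m => map (cons false) (all_bits m) ++ map (cons true) (all_bits m)
  end.

Definition sumR {A : Type} (l : list A) (f : A -> R) : R :=
  fold_right (fun a acc => f a + acc) 0 l.

(* A classical probabilistic polynomial-time algorithm: a TM that gets   *)
(* its input (x,b) and a uniformly random string r of polynomial length, *)
(* and is clocked to a polynomial number of steps in its input length.  *)
Record PPTM : Type := mkPPTM {
  ptm : TM;
  time_c : nat; time_k : nat;
  rand_c : nat; rand_k : nat
}.

Definition rand_len (M : PPTM) (x b : list bool) : nat :=
  poly_bound (rand_c M) (rand_k M) (length x + length b).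

Definition run_accepts (M : PPTM) (x b r : list bool) : bool :=
  let w := encode3 x b r in
  accepts_within (ptm M) (poly_bound (time_c M) (time_k M) (length w)) w.

Definition acc_prob (M : PPTM) (x b : list bool) : R :=
  INR (length (filter (run_accepts M x b) (all_bits (rand_len M x b))))
  / 2 ^ (rand_len M x b).

Definition advice_dist_family (len : nat -> nat) (q : nat -> list bool -> R) : Prop :=
  forall s : nat,
    (forall b, 0 <= q s b) /\
    (forall b, length b <> len s -> q s b = 0) /\
    sumR (all_bits (len s)) (q s) = 1.

Definition total_acc_prob (M : PPTM) (len : nat -> nat) (q : nat -> list bool -> R)
    (x : list bool) : R :=
  sumR (all_bits (len (length x))) (fun b => q (length x) b * acc_prob M x b).

Definition promise_problem (Ayes Ano : list bool -> Prop) : Prop :=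
  forall x, Ayes x -> Ano x -> False.

Definition in_NP_rpoly (Ayes Ano : list bool -> Prop) : Prop :=
  exists (M : PPTM) (len : nat -> nat) (c k : nat) (q : nat -> list bool -> R),
    (forall s, (len s <= poly_bound c k s)%nat) /\
    advice_dist_family len q /\
    forall x : list bool,
      (Ayes x -> total_acc_prob M len q x > 0) /\
      (Ano x -> total_acc_prob M len q x = 0).

(* Main.v *)
Require Import Defs.
From Stdlib Require Import Reals List Arith Bool Lia Lra Psatz ClassicalEpsilon.
Import ListNotations.
Open Scope nat_scope.

Definition dl (q : nat) (y : sym) : nat * sym * move :=
  match q, y with
  | 0, Zero => (2, Blank, MRight) | 0, One => (3, Blank, MRight)
  | 0, Sep => (6, Sep, MRight)
  | 2, Zero => (2, Zero, MRight) | 2, One => (2, One, MRight)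
  | 2, Sep => (4, Sep, MRight)
  | 3, Zero => (3, Zero, MRight) | 3, One => (3, One, MRight)
  | 3, Sep => (5, Sep, MRight)
  | 4, Blank => (4, Blank, MRight) | 4, Zero => (7, Blank, MLeft)
  | 5, Blank => (5, Blank, MRight) | 5, One => (7, Blank, MLeft)
  | 7, Blank => (7, Blank, MLeft) | 7, Sep => (8, Sep, MLeft)
  | 8, Zero => (8, Zero, MLeft) | 8, One => (8, One, MLeft)
  | 8, Blank => (0, Blank, MRight)
  | 6, Blank => (6, Blank, MRight) | 6, One => (9, One, MRight)
  | 9, Sep => (1, Sep, MStay)
  | _, _ => (10, y, MStay)
  end.

Definition TMc : TM := mkTM 10 dl.

Definition tape (q : nat) (L w : list sym) : config :=
  match w with nil => mkConfig q L Blank nil | h :: t => mkConfig q L h t end.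

Definition Hh (c : config) (t st : nat) : Prop :=
  forall t', (t <= t')%nat -> cst (run TMc t' c) = st.

Lemma iter_succ_r : forall n c, run TMc (S n) c = run TMc n (step TMc c).
Proof.
  induction n; intros; [reflexivity|].
  change (step TMc (run TMc (S n) c) = step TMc (run TMc n (step TMc c))).
  rewrite IHn. reflexivity.
Qed.

Lemma Hh_step : forall c t st, Hh (step TMc c) t st -> Hh c (S t) st.
Proof.
  intros c t st H t' Ht. destruct t' as [|t']; [lia|].
  rewrite iter_succ_r. apply H. lia.
Qed.

Lemma Hh_mono : forall c t t' st, Hh c t st -> (t <= t')%nat -> Hh c t' st.
Proof. intros c t t2 st H Ht t' Ht'. apply H. lia. Qed.

Lemma step_halt : forall c, (cst c = 1 \/ 10 <= cst c)%nat -> step TMc c = c.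
Proof.
  intros c H. unfold step.
  destruct (Nat.eqb (cst c) 1) eqn:E; [reflexivity|].
  apply Nat.eqb_neq in E.
  assert (E2 : Nat.ltb (cst c) (nstates TMc) = false) by (apply Nat.ltb_ge; simpl; lia).
  rewrite E2. reflexivity.
Qed.

Lemma Hh_halt : forall q L w, (q = 1 \/ 10 <= q)%nat -> Hh (tape q L w) 0 q.
Proof.
  intros q L w H t' _.
  assert (Hc : cst (tape q L w) = q) by (destruct w; reflexivity).
  induction t'.
  - exact Hc.
  - change (cst (step TMc (run TMc t' (tape q L w))) = q).
    rewrite step_halt; [exact IHt'|]. rewrite IHt'. lia.
Qed.

Lemma cond_false : forall q, (q < 10)%nat -> q <> 1%nat ->
  orb (Nat.eqb q 1) (negb (Nat.ltb q (nstates TMc))) = false.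
Proof.
  intros q H1 H2. apply orb_false_iff. split.
  - apply Nat.eqb_neq; auto.
  - simpl. apply negb_false_iff. apply Nat.ltb_lt. auto.
Qed.

Lemma stepR : forall q L y w q' y', (q < 10)%nat -> q <> 1%nat ->
  dl q y = (q', y', MRight) -> step TMc (tape q L (y :: w)) = tape q' (y' :: L) w.
Proof.
  intros. unfold step. cbn [tape cst ccur cleft cright].
  rewrite cond_false by auto. cbn [delta TMc]. rewrite H1. destruct w; reflexivity.
Qed.

Lemma stepL : forall q L y w q' y', (q < 10)%nat -> q <> 1%nat ->
  dl q y = (q', y', MLeft) ->
  step TMc (tape q L (y :: w)) = tape q' (tl L) (hd Blank L :: y' :: w).
Proof.
  intros. unfold step. cbn [tape cst ccur cleft cright].
  rewrite cond_false by auto. cbn [delta TMc]. rewrite H1. destruct L; reflexivity.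
Qed.

Lemma stepS : forall q L y w q' y', (q < 10)%nat -> q <> 1%nat ->
  dl q y = (q', y', MStay) -> step TMc (tape q L (y :: w)) = tape q' L (y' :: w).
Proof.
  intros. unfold step. cbn [tape cst ccur cleft cright].
  rewrite cond_false by auto. cbn [delta TMc]. rewrite H1. reflexivity.
Qed.

Lemma scanR : forall q u L w t st,
  (forall y, In y u -> dl q y = (q, y, MRight)) -> (q < 10)%nat -> q <> 1%nat ->
  Hh (tape q (rev u ++ L) w) t st -> Hh (tape q L (u ++ w)) (length u + t) st.
Proof.
  intros q u. induction u as [|y u IH]; intros L w t st Hd H1 H2 H; [exact H|].
  change (Hh (tape q L (y :: u ++ w)) (S (length u + t)) st).
  apply Hh_step. rewrite (stepR q L y (u ++ w) q y) by (auto; apply Hd; left; auto).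
  apply IH; auto. intros; apply Hd; right; auto.
  simpl in H. rewrite <- app_assoc in H. exact H.
Qed.

Lemma scanL : forall q u L w t st,
  (forall y, In y u -> dl q y = (q, y, MLeft)) -> (q < 10)%nat -> q <> 1%nat ->
  Hh (tape q (tl L) (hd Blank L :: rev u ++ w)) t st ->
  Hh (tape q (tl (u ++ L)) (hd Blank (u ++ L) :: w)) (length u + t) st.
Proof.
  intros q u. induction u as [|y u IH]; intros L w t st Hd H1 H2 H; [exact H|].
  change (Hh (tape q (u ++ L) (y :: w)) (S (length u + t)) st).
  apply Hh_step. rewrite (stepL q (u ++ L) y w q y) by (auto; apply Hd; left; auto).
  apply IH; auto. intros; apply Hd; right; auto.
  simpl in H. rewrite <- app_assoc in H. exact H.
Qed.

Lemma blanks_snoc : forall k W, repeat Blank k ++ Blank :: W = repeat Blank (S k) ++ W.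
Proof. induction k; intros; simpl; [reflexivity|]. rewrite IHk. reflexivity. Qed.

Definition T (n k : nat) : nat := ((n + 1) * (2 * n + 2 * k + 5))%nat.

Lemma In_blanks : forall q m k y, dl q Blank = (q, Blank, m) -> In y (repeat Blank k) -> dl q y = (q, y, m).
Proof. intros. apply repeat_spec in H0. subst. auto. Qed.

Lemma cc (a : bool) b x : (if list_eq_dec bool_dec (a :: b) ((a :: x) ++ [true]) then 1 else 10) =
  (if list_eq_dec bool_dec b (x ++ [true]) then 1 else 10).
Proof.
  destruct (list_eq_dec bool_dec b (x ++ [true])) as [E|E];
  destruct (list_eq_dec bool_dec (a :: b) ((a :: x) ++ [true])) as [E'|E']; auto.
  - subst. simpl in E'. congruence.
  - inversion E'. congruence.
Qed.

Lemma main_run : forall x j k b R,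
  Hh (tape 0 (repeat Blank j) (map bit x ++ Sep :: repeat Blank k ++ map bit b ++ Sep :: R))
     (T (length x) k) (if list_eq_dec bool_dec b (x ++ [true]) then 1 else 10)%nat.
Proof.
  induction x as [|a x IH]; intros j k b R.
  - simpl map. simpl app.
    destruct b as [|c b]; [|destruct c; [destruct b as [|d b]|]].
    + destruct (list_eq_dec _ _ _); [discriminate|].
      eapply Hh_mono.
      apply Hh_step. rewrite (stepR 0 _ Sep _ 6 Sep) by (reflexivity || lia).
      apply scanR; [intros; eapply In_blanks; [reflexivity|eauto] | lia | lia |].
      cbn [map app bit]. apply Hh_step. rewrite (stepS 6 _ Sep _ 10 Sep) by (reflexivity || lia).
      apply Hh_halt; lia.
      unfold T; simpl; rewrite ?length_rev, ?length_map, ?repeat_length; lia.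
    + destruct (list_eq_dec _ _ _); [|congruence].
      eapply Hh_mono.
      apply Hh_step. rewrite (stepR 0 _ Sep _ 6 Sep) by (reflexivity || lia).
      apply scanR; [intros; eapply In_blanks; [reflexivity|eauto] | lia | lia |].
      cbn [map app bit]. apply Hh_step. rewrite (stepR 6 _ One _ 9 One) by (reflexivity || lia).
      apply Hh_step. rewrite (stepS 9 _ Sep _ 1 Sep) by (reflexivity || lia).
      apply Hh_halt; lia.
      unfold T; simpl; rewrite ?length_rev, ?length_map, ?repeat_length; lia.
    + destruct (list_eq_dec _ _ _); [discriminate|].
      eapply Hh_mono.
      apply Hh_step. rewrite (stepR 0 _ Sep _ 6 Sep) by (reflexivity || lia).
      apply scanR; [intros; eapply In_blanks; [reflexivity|eauto] | lia | lia |].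
      cbn [map app bit]. apply Hh_step. rewrite (stepR 6 _ One _ 9 One) by (reflexivity || lia).
      apply Hh_step. rewrite (stepS 9 _ (bit d) _ 10 (bit d)) by (destruct d; (reflexivity || lia)).
      apply Hh_halt; lia.
      unfold T; simpl; rewrite ?length_rev, ?length_map, ?repeat_length; lia.
    + destruct (list_eq_dec _ _ _); [discriminate|].
      eapply Hh_mono.
      apply Hh_step. rewrite (stepR 0 _ Sep _ 6 Sep) by (reflexivity || lia).
      apply scanR; [intros; eapply In_blanks; [reflexivity|eauto] | lia | lia |].
      cbn [map app bit]. apply Hh_step. rewrite (stepS 6 _ Zero _ 10 Zero) by (reflexivity || lia).
      apply Hh_halt; lia.
      unfold T; simpl; rewrite ?length_rev, ?length_map, ?repeat_length; lia.
  - destruct b as [|c b].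
    { destruct (list_eq_dec _ _ _) as [E|]; [destruct x; discriminate|].
      destruct a; simpl map; simpl app; eapply Hh_mono.
      all: try (apply Hh_step; erewrite stepR by (reflexivity || lia);
      apply scanR; [intros y Hy; apply in_map_iff in Hy; destruct Hy as [z [<- _]]; destruct z; reflexivity | lia | lia |];
      apply Hh_step; erewrite stepR by (reflexivity || lia);
      apply scanR; [intros; eapply In_blanks; [reflexivity|eauto] | lia | lia |];
      apply Hh_step; erewrite stepS by (reflexivity || lia);
      apply Hh_halt; lia).
      all: unfold T; rewrite ?length_map, ?repeat_length; simpl; nia. }
    destruct (bool_dec c a) as [Hca|Hca].
    + subst c.
      rewrite cc.
      destruct a; cbn [map app bit]; eapply Hh_mono.
      all: try (apply Hh_step; erewrite stepR by (reflexivity || lia);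
      apply scanR; [intros y Hy; apply in_map_iff in Hy; destruct Hy as [z [<- _]]; destruct z; reflexivity | lia | lia |];
      apply Hh_step; erewrite stepR by (reflexivity || lia);
      apply scanR; [intros; eapply In_blanks; [reflexivity|eauto] | lia | lia |];
      apply Hh_step; erewrite stepL by (reflexivity || lia);
      rewrite rev_repeat;
      apply (scanL 7 (repeat Blank k) (Sep :: rev (map bit x) ++ Blank :: repeat Blank j));
        [intros; eapply In_blanks; [reflexivity|eauto] | lia | lia |];
      cbn [tl hd]; apply Hh_step; erewrite stepL by (reflexivity || lia);
      apply (scanL 8 (rev (map bit x)) (Blank :: repeat Blank j));
        [intros y Hy; rewrite <- in_rev in Hy; apply in_map_iff in Hy; destruct Hy as [z [<- _]]; destruct z; reflexivity | lia | lia |];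
      cbn [tl hd]; rewrite rev_involutive, rev_repeat;
      apply Hh_step; erewrite stepR by (reflexivity || lia);
      rewrite blanks_snoc; change (Blank :: repeat Blank j) with (repeat Blank (S j));
      apply IH).
      all: unfold T; cbn [length]; rewrite ?length_rev, ?length_map, ?repeat_length; nia.
    + destruct (list_eq_dec _ _ _) as [E|]; [inversion E; congruence|].
      destruct a; destruct c; try congruence; cbn [map app bit]; eapply Hh_mono.
      all: try (apply Hh_step; erewrite stepR by (reflexivity || lia);
      apply scanR; [intros y Hy; apply in_map_iff in Hy; destruct Hy as [z [<- _]]; destruct z; reflexivity | lia | lia |];
      apply Hh_step; erewrite stepR by (reflexivity || lia);
      apply scanR; [intros; eapply In_blanks; [reflexivity|eauto] | lia | lia |];
      apply Hh_step; erewrite stepS by (reflexivity || lia);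
      apply Hh_halt; lia).
      all: unfold T; cbn [length]; rewrite ?length_rev, ?length_map, ?repeat_length; nia.
Qed.

Lemma init_tape : forall w, init_config w = tape 0 nil w.
Proof. destruct w; reflexivity. Qed.

Definition Mp : PPTM := mkPPTM TMc 2 2 0 0.

Lemma run_acc_eq : forall x b,
  run_accepts Mp x b nil = if list_eq_dec bool_dec b (x ++ [true]) then true else false.
Proof.
  intros x b. unfold run_accepts, accepts_within.
  set (w := encode3 x b nil).
  assert (Hw : w = map bit x ++ Sep :: repeat Blank 0 ++ map bit b ++ Sep :: nil) by reflexivity.
  assert (Hl : length w = (length x + S (length b + 1))%nat)
    by (rewrite Hw; simpl; rewrite length_app, length_map; simpl; rewrite length_app, length_map; simpl; lia).
  rewrite init_tape.
  pose proof (main_run x 0 0 b nil) as H. rewrite <- Hw in H.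
  cbn [repeat] in H.
  unfold Mp; cbn [ptm time_c time_k].
  rewrite (H (poly_bound 2 2 (length w))).
  - destruct (list_eq_dec _ _ _); reflexivity.
  - rewrite Hl. unfold T, poly_bound. simpl. nia.
Qed.

Open Scope R_scope.

Lemma acc_val : forall x b, acc_prob Mp x b =
  if list_eq_dec bool_dec b (x ++ [true]) then 1 else 0.
Proof.
  intros x b. unfold acc_prob.
  replace (rand_len Mp x b) with 0%nat by reflexivity.
  cbn [all_bits filter]. rewrite run_acc_eq.
  destruct (list_eq_dec _ _ _); cbn [length INR pow]; field.
Qed.

Definition bP (A : list bool -> Prop) (x : list bool) : bool :=
  if excluded_middle_informative (A x) then true else false.

Definition qd (A : list bool -> Prop) (s : nat) (b : list bool) : R :=
  if Nat.eqb (length b) (S s) then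
    (if Bool.eqb (bP A (removelast b)) (last b false) then / 2 ^ s else 0)
  else 0.

Lemma sumR_app : forall {A} (l1 l2 : list A) f, sumR (l1 ++ l2) f = sumR l1 f + sumR l2 f.
Proof. induction l1; intros; simpl; [ring|]. unfold sumR in *. simpl. rewrite IHl1. ring. Qed.

Lemma sumR_map : forall {A B} (g : A -> B) l f, sumR (map g l) f = sumR l (fun a => f (g a)).
Proof. induction l; intros; simpl; [reflexivity|]. unfold sumR in *; simpl. rewrite IHl. reflexivity. Qed.

Lemma sumR_ext : forall {A} (l : list A) f g, (forall a, In a l -> f a = g a) -> sumR l f = sumR l g.
Proof.
  induction l; intros; simpl; [reflexivity|]. unfold sumR in *; simpl.
  rewrite H by (left; auto). rewrite (IHl f g) by (intros; apply H; right; auto). reflexivity.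
Qed.

Lemma sumR_plus : forall {A} (l : list A) f g, sumR l (fun a => f a + g a) = sumR l f + sumR l g.
Proof. induction l; intros; unfold sumR in *; simpl; [ring|]. rewrite IHl. ring. Qed.

Lemma all_bits_snoc : forall n f, sumR (all_bits (S n)) f =
  sumR (all_bits n) (fun x => f (x ++ [false]) + f (x ++ [true])).
Proof.
  induction n; intros f.
  - unfold sumR; simpl. ring.
  - change (all_bits (S (S n))) with
      (map (cons false) (all_bits (S n)) ++ map (cons true) (all_bits (S n))).
    change (all_bits (S n)) with
      (map (cons false) (all_bits n) ++ map (cons true) (all_bits n)) at 3.
    rewrite !sumR_app, !sumR_map, !IHn. reflexivity.
Qed.

Lemma all_bits_const : forall n c, sumR (all_bits n) (fun _ => c) = 2 ^ n * c.
Proof.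
  induction n; intros c.
  - unfold sumR; simpl. ring.
  - simpl. rewrite sumR_app, !sumR_map, IHn. ring.
Qed.

Lemma all_bits_len : forall n x, In x (all_bits n) -> length x = n.
Proof.
  induction n; intros x H; simpl in H.
  - destruct H as [<-|[]]; reflexivity.
  - apply in_app_or in H. destruct H as [H|H]; apply in_map_iff in H;
      destruct H as [y [<- Hy]]; simpl; rewrite (IHn y Hy); reflexivity.
Qed.

Lemma all_bits_in : forall x, In x (all_bits (length x)).
Proof.
  induction x as [|a x IH]; simpl; [left; reflexivity|].
  apply in_or_app. destruct a; [right|left]; apply in_map; auto.
Qed.

Lemma sumR_pos : forall {A} (l : list A) f a0, (forall a, 0 <= f a) -> In a0 l -> 0 < f a0 -> 0 < sumR l f.
Proof.
  induction l; intros f a0 H1 H2 H3; [destruct H2|]. unfold sumR in *; simpl.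
  destruct H2 as [<-|H2].
  - pose proof (H1 a). assert (0 <= fold_right (fun a1 acc => f a1 + acc) 0 l).
    { clear -H1. induction l; simpl; [lra|]. pose proof (H1 a). lra. }
    lra.
  - pose proof (H1 a). pose proof (IHl f a0 H1 H2 H3). lra.
Qed.

Lemma sumR_zero : forall {A} (l : list A) f, (forall a, f a = 0) -> sumR l f = 0.
Proof. induction l; intros; unfold sumR in *; simpl; [reflexivity|]. rewrite H, IHl; auto. ring. Qed.

Lemma qd_nonneg : forall A s b, 0 <= qd A s b.
Proof.
  intros. unfold qd. destruct (Nat.eqb _ _); [|lra]. destruct (Bool.eqb _ _); [|lra].
  left. apply Rinv_0_lt_compat, pow_lt. lra.
Qed.

Lemma qd_snoc : forall A s x f, length x = s ->
  qd A s (x ++ [f]) = if Bool.eqb (bP A x) f then / 2 ^ s else 0.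
Proof.
  intros. unfold qd. rewrite length_app. simpl.
  replace (Nat.eqb (length x + 1) (S s)) with true by (symmetry; apply Nat.eqb_eq; lia).
  rewrite removelast_last, last_last. reflexivity.
Qed.

Theorem mainTheorem6 :
  forall (Ayes Ano : list bool -> Prop),
    promise_problem Ayes Ano -> in_NP_rpoly Ayes Ano.
Proof.
  intros Ayes Ano Hp.
  exists Mp, S, 1%nat, 1%nat, (qd Ayes).
  split; [intros s; unfold poly_bound; simpl; lia|].
  split.
  - intros s. split; [apply qd_nonneg|]. split.
    + intros b Hb. unfold qd. apply Nat.eqb_neq in Hb. rewrite Hb. reflexivity.
    + rewrite all_bits_snoc.
      rewrite (sumR_ext _ _ (fun _ => / 2 ^ s)).
      * rewrite all_bits_const. field. apply pow_nonzero. lra.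
      * intros x Hx. apply all_bits_len in Hx.
        rewrite !qd_snoc by auto. destruct (bP Ayes x); simpl; ring.
  - intros x. unfold total_acc_prob. split.
    + intros Hy. apply (sumR_pos _ _ (x ++ [true])).
      * intros b. rewrite acc_val. pose proof (qd_nonneg Ayes (length x) b).
        destruct (list_eq_dec _ _ _); nra.
      * replace (S (length x)) with (length (x ++ [true])) by (rewrite length_app; simpl; lia).
        apply all_bits_in.
      * rewrite acc_val, qd_snoc by reflexivity.
        destruct (list_eq_dec _ _ _) as [_|C]; [|congruence].
        unfold bP. destruct (excluded_middle_informative (Ayes x)) as [_|C]; [|tauto].
        simpl. rewrite Rmult_1_r. apply Rinv_0_lt_compat, pow_lt. lra.
    + intros Hn. apply sumR_zero. intros b. rewrite acc_val.
      destruct (list_eq_dec _ _ _) as [->|_]; [|ring].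
      rewrite qd_snoc by reflexivity. unfold bP.
      destruct (excluded_middle_informative (Ayes x)) as [Hy|_].
      * exfalso. exact (Hp x Hy Hn).
      * simpl. ring.
Qed.
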